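(* Let $N\ge1$, $E=\{0,1,\dots,N\}$, and let $Q$ be the birth–death matrix on $E$ with $q_{00}=-b_0$, $q_{01}=b_0$; $q_{n,n-1}=a_n$, $q_{nn}=-(a_n+b_n)$, $q_{n,n+1}=b_n$ for $1\le n\le N-1$; $q_{N,N-1}=a_N$, $q_{NN}=-(a_N+b_N)$; all other entries $0$; where $a_i>0$ $(1\le i\le N)$ and $b_i>0$ $(0\le i\le N)$. Let $\lambda_0=\lambda_{\min}(-Q)>0$ be the minimal eigenvalue of $-Q$. Let $f_1$ be any vector with $f_1(i)>0$ for all $i\in E$ and define successively $f_{n+1}=f_n\,I\!I(f_n)$ (componentwise product), $n\ge1$. Then $f_{n+1}=(-Q)^{-1}f_n=(-Q)^{-n}f_1$ for all $n\ge1$; moreover, for every $i\in E$, $$\lim_{n\to\infty}I\!I(f_n)(i)=\frac1{\lambda_0},$$ and consequently $\lim_{n\to\infty}\min_{i\in E}I\!I(f_n)(i)=1/\lambda_0=\lim_{n\to\infty}\max_{i\in E}I\!I(f_n)(i)$.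
   Context: Define $\mu_0=1$ and $\mu_n=\frac{b_0b_1\cdots b_{n-1}}{a_1a_2\cdots a_n}$ for $1\le n\le N$. For a positive function $f$ on $E$ define $$I\!I(f)(i)=\frac1{f_i}\sum_{j=i}^N\frac1{\mu_jb_j}\sum_{k=0}^j\mu_kf_k,\qquad i\in E.$$ *)

(* Defs.v *)
From Stdlib Require Import Reals.
Open Scope R_scope.

(* Vectors on E = {0,...,N} are functions nat -> R (only indices <= N matter). *)

Definition qent (N : nat) (a b : nat -> R) (i j : nat) : R :=
  if Nat.eqb i 0 then
    (if Nat.eqb j 0 then - b 0%nat else if Nat.eqb j 1 then b 0%nat else 0)
  else if Nat.ltb i N then
    (if Nat.eqb j (i - 1) then a i
     else if Nat.eqb j i then - (a i + b i)
     else if Nat.eqb j (S i) then b i else 0)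
  else if Nat.eqb i N then
    (if Nat.eqb j (N - 1) then a N
     else if Nat.eqb j N then - (a N + b N) else 0)
  else 0.

Definition negQ (N : nat) (a b : nat -> R) (v : nat -> R) (i : nat) : R :=
  sum_f_R0 (fun j => - qent N a b i j * v j) N.

Fixpoint negQpow (N : nat) (a b : nat -> R) (n : nat) (v : nat -> R) : nat -> R :=
  match n with
  | O => v
  | S m => negQ N a b (negQpow N a b m v)
  end.

Definition is_eigenvalue_negQ (N : nat) (a b : nat -> R) (lam : R) : Prop :=
  exists v : nat -> R, (exists i, (i <= N)%nat /\ v i <> 0) /\
    forall i, (i <= N)%nat -> negQ N a b v i = lam * v i.

Definition is_min_eigenvalue_negQ (N : nat) (a b : nat -> R) (lam : R) : Prop :=
  is_eigenvalue_negQ N a b lam /\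
  forall mu, is_eigenvalue_negQ N a b mu -> lam <= mu.

Fixpoint prodR (g : nat -> R) (m n : nat) : R :=
  match n with
  | O => 1
  | S p => prodR g m p * g (m + p)%nat
  end.

Definition mu (a b : nat -> R) (n : nat) : R :=
  prodR b 0 n / prodR a 1 n.

Definition II (N : nat) (a b : nat -> R) (f : nat -> R) (i : nat) : R :=
  / f i * sum_f i N (fun j => / (mu a b j * b j) *
                               sum_f_R0 (fun k => mu a b k * f k) j).

Fixpoint minE (g : nat -> R) (N : nat) : R :=
  match N with
  | O => g 0%nat
  | S n => Rmin (minE g n) (g (S n))
  end.
Fixpoint maxE (g : nat -> R) (N : nat) : R :=
  match N with
  | O => g 0%nat
  | S n => Rmax (maxE g n) (g (S n))
  end.

(* Main.v *)
Require Import Defs.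
From Stdlib Require Import Reals Lra Lia.
Open Scope R_scope.

Lemma sumR_add (F G : nat -> R) n :
  sum_f_R0 (fun k => F k + G k) n = sum_f_R0 F n + sum_f_R0 G n.
Proof. induction n; simpl; [ring | rewrite IHn; ring]. Qed.

Lemma sumR_scal (F : nat -> R) c n :
  sum_f_R0 (fun k => c * F k) n = c * sum_f_R0 F n.
Proof. induction n; simpl; [ring | rewrite IHn; ring]. Qed.

Lemma sumR_lin (F G : nat -> R) p q n :
  sum_f_R0 (fun k => p * F k + q * G k) n = p * sum_f_R0 F n + q * sum_f_R0 G n.
Proof. induction n; simpl; [ring | rewrite IHn; ring]. Qed.

Lemma sumR_nonneg (F : nat -> R) n :
  (forall k, (k <= n)%nat -> 0 <= F k) -> 0 <= sum_f_R0 F n.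
Proof.
  induction n; intros H; simpl. apply H; lia.
  assert (0 <= sum_f_R0 F n) by (apply IHn; intros; apply H; lia).
  assert (0 <= F (S n)) by (apply H; lia). lra.
Qed.

Lemma sumR_term (F : nat -> R) n k :
  (forall k, (k <= n)%nat -> 0 <= F k) -> (k <= n)%nat -> F k <= sum_f_R0 F n.
Proof.
  induction n; intros H Hk; simpl.
  - replace k with 0%nat by lia. lra.
  - destruct (Nat.eq_dec k (S n)) as [->|Hne].
    + assert (0 <= sum_f_R0 F n) by (apply sumR_nonneg; intros; apply H; lia). lra.
    + assert (F k <= sum_f_R0 F n) by (apply IHn; [intros; apply H; lia | lia]).
      assert (0 <= F (S n)) by (apply H; lia). lra.
Qed.

Lemma sumR_mono (F : nat -> R) j n :
  (forall k, (k <= n)%nat -> 0 <= F k) -> (j <= n)%nat -> sum_f_R0 F j <= sum_f_R0 F n.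
Proof.
  induction n; intros H Hj.
  - replace j with 0%nat by lia. lra.
  - destruct (Nat.eq_dec j (S n)) as [->|Hne]. lra.
    simpl. assert (sum_f_R0 F j <= sum_f_R0 F n) by (apply IHn; [intros; apply H; lia | lia]).
    assert (0 <= F (S n)) by (apply H; lia). lra.
Qed.

Lemma sumR_ind (p : nat) (x : R) n :
  sum_f_R0 (fun j => if Nat.eqb j p then x else 0) n = if Nat.leb p n then x else 0.
Proof.
  induction n; cbn [sum_f_R0].
  - destruct p; simpl; lra.
  - rewrite IHn. destruct (Nat.eqb_spec (S n) p); destruct (Nat.leb_spec p n);
    destruct (Nat.leb_spec p (S n)); try lia; lra.
Qed.

Lemma sumR_zero (F : nat -> R) n :
  (forall k, (k <= n)%nat -> F k = 0) -> sum_f_R0 F n = 0.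
Proof.
  induction n; intros H; simpl. apply H; lia.
  rewrite IHn by (intros; apply H; lia). rewrite H by lia. ring.
Qed.

Lemma sumf_last c n : sum_f n n c = c n.
Proof. unfold sum_f. rewrite Nat.sub_diag. simpl. reflexivity. Qed.

Lemma sumf_snoc c i n : (i <= n)%nat -> sum_f i (S n) c = sum_f i n c + c (S n).
Proof.
  intros H. unfold sum_f. replace (S n - i)%nat with (S (n - i)) by lia.
  simpl. f_equal. f_equal. lia.
Qed.

Definition pre (c : nat -> R) (i : nat) : R :=
  match i with O => 0 | S p => sum_f_R0 c p end.

Lemma sumf_split c i n : (i <= n)%nat -> sum_f_R0 c n = pre c i + sum_f i n c.
Proof.
  induction n; intros H.
  - replace i with 0%nat by lia. rewrite sumf_last. simpl. ring.
  - destruct (Nat.eq_dec i (S n)) as [->|Hne].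
    + rewrite sumf_last. simpl. reflexivity.
    + rewrite sumf_snoc by lia. simpl. rewrite IHn by lia. ring.
Qed.

Lemma sumf_step c i n : (i < n)%nat -> sum_f i n c = c i + sum_f (S i) n c.
Proof.
  intros H. pose proof (sumf_split c i n ltac:(lia)).
  pose proof (sumf_split c (S i) n H).
  assert (pre c (S i) = pre c i + c i) by (destruct i; simpl; ring). lra.
Qed.



Lemma sumf_ext c d i n : (i <= n)%nat -> (forall j, (i <= j <= n)%nat -> c j = d j) ->
  sum_f i n c = sum_f i n d.
Proof. intros Hi H. unfold sum_f. apply sum_eq. intros k Hk. apply H; lia. Qed.

Lemma sumf_lin c d p q i n :
  sum_f i n (fun j => p * c j + q * d j) = p * sum_f i n c + q * sum_f i n d.
Proof. unfold sum_f. apply sumR_lin. Qed.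

Lemma sumf_nonneg c i n : (i <= n)%nat -> (forall j, (j <= n)%nat -> 0 <= c j) -> 0 <= sum_f i n c.
Proof. intros Hi H. unfold sum_f. apply sumR_nonneg. intros; apply H; lia. Qed.

Lemma sumf_ge_last c i n : (i <= n)%nat -> (forall j, (j <= n)%nat -> 0 <= c j) -> c n <= sum_f i n c.
Proof.
  intros Hi H. unfold sum_f.
  replace (c n) with (c (n - i + i)%nat) by (f_equal; lia).
  apply (sumR_term (fun x => c (x + i)%nat)); [intros; apply H; lia | lia].
Qed.

Lemma sumf_le_full c i n : (i <= n)%nat -> (forall j, (j <= n)%nat -> 0 <= c j) -> sum_f i n c <= sum_f_R0 c n.
Proof.
  intros Hi H. rewrite (sumf_split c i n Hi).
  assert (0 <= pre c i). { destruct i; simpl. lra. apply sumR_nonneg; intros; apply H; lia. }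
  lra.
Qed.

Lemma abel (g c : nat -> R) n :
  sum_f_R0 (fun i => g i * sum_f i n c) n = sum_f_R0 (fun j => c j * sum_f_R0 g j) n.
Proof.
  induction n.
  - simpl. rewrite sumf_last. ring.
  - simpl. rewrite <- IHn. rewrite sumf_last.
    rewrite (sum_eq (fun i => g i * sum_f i (S n) c) (fun i => g i * sum_f i n c + c (S n) * g i)).
    2:{ intros i Hi. rewrite sumf_snoc by lia. ring. }
    rewrite sumR_add, sumR_scal. ring.
Qed.

Lemma minE_le g n k : (k <= n)%nat -> minE g n <= g k.
Proof.
  induction n; intros Hk; simpl.
  - replace k with 0%nat by lia. lra.
  - destruct (Nat.eq_dec k (S n)) as [->|]. apply Rmin_r.
    pose proof (Rmin_l (minE g n) (g (S n))). pose proof (IHn ltac:(lia)). lra.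
Qed.
Lemma maxE_ge g n k : (k <= n)%nat -> g k <= maxE g n.
Proof.
  induction n; intros Hk; simpl.
  - replace k with 0%nat by lia. lra.
  - destruct (Nat.eq_dec k (S n)) as [->|]. apply Rmax_r.
    pose proof (Rmax_l (maxE g n) (g (S n))). pose proof (IHn ltac:(lia)). lra.
Qed.
Lemma minE_glb g n c : (forall k, (k <= n)%nat -> c <= g k) -> c <= minE g n.
Proof.
  induction n; intros H; simpl. apply H; lia.
  apply Rmin_glb. apply IHn; intros; apply H; lia. apply H; lia.
Qed.
Lemma maxE_lub g n c : (forall k, (k <= n)%nat -> g k <= c) -> maxE g n <= c.
Proof.
  induction n; intros H; simpl. apply H; lia.
  apply Rmax_lub. apply IHn; intros; apply H; lia. apply H; lia.
Qed.
Lemma minE_ex g n : exists k, (k <= n)%nat /\ minE g n = g k.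
Proof.
  induction n; simpl. exists 0%nat; split; [lia|reflexivity].
  destruct IHn as [k [Hk E]]. unfold Rmin. destruct (Rle_dec (minE g n) (g (S n))).
  exists k; split; [lia|auto]. exists (S n); split; [lia|auto].
Qed.
Lemma maxE_ex g n : exists k, (k <= n)%nat /\ maxE g n = g k.
Proof.
  induction n; simpl. exists 0%nat; split; [lia|reflexivity].
  destruct IHn as [k [Hk E]]. unfold Rmax. destruct (Rle_dec (maxE g n) (g (S n))).
  exists (S n); split; [lia|auto]. exists k; split; [lia|auto].
Qed.

Lemma Rabs_def2b a b : Rabs a <= b -> - b <= a <= b.
Proof. unfold Rabs; destruct (Rcase_abs a); intros; lra. Qed.

Lemma Un_cv_ext s t l : (forall n, s n = t n) -> Un_cv s l -> Un_cv t l.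
Proof. intros H C e He. destruct (C e He) as [M HM]. exists M. intros n Hn. rewrite <- H. auto. Qed.

Lemma Un_cv_shift s p l : Un_cv (fun k => s (k + p)%nat) l -> Un_cv s l.
Proof.
  intros C e He. destruct (C e He) as [M HM]. exists (M + p)%nat. intros n Hn.
  replace n with ((n - p) + p)%nat by lia. apply HM. lia.
Qed.

Lemma Un_cv_const c : Un_cv (fun _ => c) c.
Proof. intros e He. exists 0%nat. intros. unfold R_dist. rewrite Rminus_diag, Rabs_R0. lra. Qed.

Lemma Un_cv_squeeze lo hi s l : (forall n, lo n <= s n <= hi n) ->
  Un_cv lo l -> Un_cv hi l -> Un_cv s l.
Proof.
  intros H C1 C2 e He. destruct (C1 e He) as [M1 H1]. destruct (C2 e He) as [M2 H2].
  exists (max M1 M2). intros n Hn. specialize (H1 n ltac:(lia)). specialize (H2 n ltac:(lia)).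
  specialize (H n). unfold R_dist in *. apply Rabs_def2 in H1. apply Rabs_def2 in H2.
  apply Rabs_def1; lra.
Qed.

Lemma Un_cv_ge s l c : (forall n, c <= s n) -> Un_cv s l -> c <= l.
Proof.
  intros H C. destruct (Rle_or_lt c l) as [|Hlt]; auto.
  destruct (C ((c - l)/2) ltac:(lra)) as [M HM]. specialize (HM M ltac:(lia)).
  specialize (H M). unfold R_dist in HM. apply Rabs_def2 in HM. lra.
Qed.

Lemma Un_cv_sum (F : nat -> nat -> R) (l : nat -> R) n :
  (forall j, (j <= n)%nat -> Un_cv (fun k => F k j) (l j)) ->
  Un_cv (fun k => sum_f_R0 (F k) n) (sum_f_R0 l n).
Proof.
  induction n; intros H; simpl. apply H; lia.
  apply CV_plus. apply IHn; intros; apply H; lia. apply H; lia.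
Qed.

Lemma pow_cv0 q : 0 <= q < 1 -> Un_cv (fun n => q ^ n) 0.
Proof.
  intros Hq e He. destruct (pow_lt_1_zero q ltac:(rewrite Rabs_pos_eq; lra) e He) as [M HM].
  exists M. intros n Hn. unfold R_dist. rewrite Rminus_0_r. auto.
Qed.

Lemma geom_cauchy (s : nat -> R) (C q : R) : 0 <= C -> 0 <= q < 1 ->
  (forall k, Rabs (s (S k) - s k) <= C * q ^ k) -> { l | Un_cv s l }.
Proof.
  intros HC Hq H.
  set (p := fun k => s k + C * q ^ k / (1 - q)).
  set (p' := fun k => s k - C * q ^ k / (1 - q)).
  assert (Hstep : forall k, C * q ^ k / (1 - q) - C * q ^ S k / (1 - q) = C * q ^ k).
  { intros k. simpl. field. lra. }
  assert (Pd : forall k, p (S k) <= p k).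
  { intros k. unfold p. specialize (H k). specialize (Hstep k). apply Rabs_def2b in H. lra. }
  assert (Pg : forall k, p' k <= p' (S k)).
  { intros k. unfold p'. specialize (H k). specialize (Hstep k). apply Rabs_def2b in H. lra. }
  assert (Pb : forall k, p k <= p 0%nat).
  { induction k. lra. specialize (Pd k). lra. }
  assert (Hpos : forall k, 0 <= C * q ^ k / (1 - q)).
  { intros k. apply Rmult_le_pos. apply Rmult_le_pos; auto. apply pow_le; lra.
    apply Rlt_le, Rinv_0_lt_compat; lra. }
  destruct (growing_cv p' Pg) as [l Hl].
  { exists (p 0%nat). intros x [k ->]. specialize (Pb k). specialize (Hpos k). unfold p, p' in *. lra. }
  exists (l + 0). apply (Un_cv_ext (fun k => p' k + C * q ^ k / (1 - q))).
  { intros k. unfold p'. ring. }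
  apply CV_plus; auto.
  replace 0 with (C * 0 / (1 - q)) by (field; lra).
  apply (Un_cv_ext (fun k => C * q ^ k * / (1 - q))). { intros; unfold Rdiv; ring. }
  unfold Rdiv. apply CV_mult. apply CV_mult. apply Un_cv_const. apply pow_cv0; auto. apply Un_cv_const.
Qed.
Definition HA (N : nat) (a : nat -> R) := forall i, (1 <= i <= N)%nat -> 0 < a i.
Definition HB (N : nat) (b : nat -> R) := forall i, (i <= N)%nat -> 0 < b i.

Lemma prodR_pos g m n : (forall k, (m <= k < m + n)%nat -> 0 < g k) -> 0 < prodR g m n.
Proof.
  induction n; intros H; simpl. lra.
  apply Rmult_lt_0_compat. apply IHn; intros; apply H; lia. apply H; lia.
Qed.

Lemma mu_pos N a b k : HA N a -> HB N b -> (k <= N)%nat -> 0 < mu a b k.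
Proof.
  intros Ha Hb Hk. unfold mu, Rdiv. apply Rmult_lt_0_compat.
  apply prodR_pos; intros; apply Hb; lia.
  apply Rinv_0_lt_compat, prodR_pos; intros; apply Ha; lia.
Qed.

Lemma mu0 a b : mu a b 0 = 1.
Proof. unfold mu. simpl. field. Qed.

Lemma mu_rec N a b k : HA N a -> HB N b -> (k < N)%nat ->
  mu a b (S k) * a (S k) = mu a b k * b k.
Proof.
  intros Ha Hb Hk. unfold mu. simpl.
  assert (0 < prodR a 1 k) by (apply prodR_pos; intros; apply Ha; lia).
  assert (0 < a (S k)) by (apply Ha; lia).
  field. split; lra.
Qed.

Lemma negQ0 N a b v : (1 <= N)%nat -> negQ N a b v 0 = b 0%nat * (v 0%nat - v 1%nat).
Proof.
  intros HN. unfold negQ.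
  rewrite (sum_eq _ (fun j => (if Nat.eqb j 0 then b 0%nat * v 0%nat else 0) +
                              (if Nat.eqb j 1 then - b 0%nat * v 1%nat else 0))).
  2:{ intros j _. unfold qent. destruct j as [|[|j]]; simpl; ring. }
  rewrite sumR_add, !sumR_ind.
  replace (Nat.leb 0 N) with true by (symmetry; apply Nat.leb_le; lia).
  replace (Nat.leb 1 N) with true by (symmetry; apply Nat.leb_le; lia). ring.
Qed.

Lemma negQmid N a b v i : (1 <= i < N)%nat ->
  negQ N a b v i = a i * (v i - v (i - 1)%nat) + b i * (v i - v (S i)).
Proof.
  intros Hi. unfold negQ.
  rewrite (sum_eq _ (fun j => (if Nat.eqb j (i - 1) then - a i * v (i - 1)%nat else 0) +
                              (if Nat.eqb j i then (a i + b i) * v i else 0) +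
                              (if Nat.eqb j (S i) then - b i * v (S i) else 0))).
  2:{ intros j _. unfold qent.
      rewrite (proj2 (Nat.eqb_neq i 0)) by lia.
      rewrite (proj2 (Nat.ltb_lt i N)) by lia.
      destruct (Nat.eqb_spec j (i - 1)); destruct (Nat.eqb_spec j i);
      destruct (Nat.eqb_spec j (S i)); try lia; subst; ring. }
  rewrite !sumR_add, !sumR_ind.
  replace (Nat.leb (i - 1) N) with true by (symmetry; apply Nat.leb_le; lia).
  replace (Nat.leb i N) with true by (symmetry; apply Nat.leb_le; lia).
  replace (Nat.leb (S i) N) with true by (symmetry; apply Nat.leb_le; lia). ring.
Qed.

Lemma negQN N a b v : (1 <= N)%nat ->
  negQ N a b v N = a N * (v N - v (N - 1)%nat) + b N * v N.
Proof.
  intros HN. unfold negQ.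
  rewrite (sum_eq _ (fun j => (if Nat.eqb j (N - 1) then - a N * v (N - 1)%nat else 0) +
                              (if Nat.eqb j N then (a N + b N) * v N else 0))).
  2:{ intros j _. unfold qent.
      rewrite (proj2 (Nat.eqb_neq N 0)) by lia.
      rewrite Nat.ltb_irrefl, Nat.eqb_refl.
      destruct (Nat.eqb_spec j (N - 1)); destruct (Nat.eqb_spec j N); try lia; subst; ring. }
  rewrite !sumR_add, !sumR_ind.
  replace (Nat.leb (N - 1) N) with true by (symmetry; apply Nat.leb_le; lia).
  replace (Nat.leb N N) with true by (symmetry; apply Nat.leb_le; lia). ring.
Qed.

Lemma negQ_ext N a b v w i : (forall j, (j <= N)%nat -> v j = w j) ->
  negQ N a b v i = negQ N a b w i.
Proof. intros H. unfold negQ. apply sum_eq. intros j Hj. rewrite H by auto. reflexivity. Qed.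

Lemma negQ_lin N a b v w p q i :
  negQ N a b (fun k => p * v k + q * w k) i = p * negQ N a b v i + q * negQ N a b w i.
Proof. unfold negQ. rewrite <- sumR_lin. apply sum_eq. intros; ring. Qed.

Lemma negQ_inj N a b v : (1 <= N)%nat -> HA N a -> HB N b ->
  (forall i, (i <= N)%nat -> negQ N a b v i = 0) -> forall i, (i <= N)%nat -> v i = 0.
Proof.
  intros HN Ha Hb H.
  assert (C : forall i, (i <= N)%nat -> forall k, (k <= i)%nat -> v k = v 0%nat).
  { induction i; intros Hi k Hk.
    - replace k with 0%nat by lia. reflexivity.
    - destruct (Nat.eq_dec k (S i)) as [->|]; [|apply IHi; lia].
      destruct i.
      + pose proof (H 0%nat ltac:(lia)) as E. rewrite negQ0 in E by lia.
        pose proof (Hb 0%nat ltac:(lia)).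
        assert (v 0%nat - v 1%nat = 0). { apply (Rmult_eq_reg_l (b 0%nat)); lra. } lra.
      + pose proof (H (S i) ltac:(lia)) as E. rewrite negQmid in E by lia.
        replace (S i - 1)%nat with i in E by lia.
        rewrite (IHi ltac:(lia) (S i)), (IHi ltac:(lia) i) in E by lia.
        pose proof (Hb (S i) ltac:(lia)).
        assert (v 0%nat - v (S (S i)) = 0). { apply (Rmult_eq_reg_l (b (S i))); lra. } lra. }
  pose proof (H N ltac:(lia)) as E. rewrite negQN in E by lia.
  rewrite (C N ltac:(lia) N), (C N ltac:(lia) (N - 1)%nat) in E by lia.
  pose proof (Hb N ltac:(lia)).
  assert (v 0%nat = 0). { apply (Rmult_eq_reg_l (b N)); lra. }
  intros i Hi. rewrite (C N ltac:(lia) i) by lia. auto.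
Qed.

Definition Tf (N : nat) (a b : nat -> R) (f : nat -> R) (i : nat) : R :=
  sum_f i N (fun j => / (mu a b j * b j) * sum_f_R0 (fun k => mu a b k * f k) j).

Lemma II_Tf N a b f i : II N a b f i = / f i * Tf N a b f i.
Proof. reflexivity. Qed.

Definition W (N : nat) (a b : nat -> R) (f : nat -> R) : R :=
  sum_f_R0 (fun k => mu a b k * f k) N.

Lemma Tf_step N a b g i : (i < N)%nat ->
  Tf N a b g i = / (mu a b i * b i) * sum_f_R0 (fun k => mu a b k * g k) i + Tf N a b g (S i).
Proof. intros H. unfold Tf. apply sumf_step. auto. Qed.

Lemma Tf_last N a b g : Tf N a b g N = / (mu a b N * b N) * W N a b g.
Proof. unfold Tf. rewrite sumf_last. reflexivity. Qed.

Lemma hh_comb N a b g p : HA N a -> HB N b -> (S p <= N)%nat ->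
  - a (S p) * (/ (mu a b p * b p) * sum_f_R0 (fun k => mu a b k * g k) p)
  + b (S p) * (/ (mu a b (S p) * b (S p)) * sum_f_R0 (fun k => mu a b k * g k) (S p)) = g (S p).
Proof.
  intros Ha Hb Hp. rewrite <- (mu_rec N a b p Ha Hb) by lia.
  cbn [sum_f_R0].
  pose proof (mu_pos N a b (S p) Ha Hb Hp). pose proof (Ha (S p) ltac:(lia)).
  pose proof (Hb (S p) Hp). field. lra.
Qed.

Lemma negQ_Tf N a b g i : (1 <= N)%nat -> HA N a -> HB N b -> (i <= N)%nat ->
  negQ N a b (Tf N a b g) i = g i.
Proof.
  intros HN Ha Hb Hi.
  destruct i as [|p].
  - rewrite negQ0 by auto. rewrite (Tf_step N a b g 0) by lia. cbn [sum_f_R0].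
    rewrite mu0. pose proof (Hb 0%nat ltac:(lia)). field. lra.
  - destruct (Nat.eq_dec (S p) N) as [E|E].
    + subst N. rewrite negQN by auto.
      replace (S p - 1)%nat with p by lia.
      rewrite (Tf_step (S p) a b g p) by lia. rewrite Tf_last. unfold W.
      rewrite <- (hh_comb (S p) a b g p Ha Hb) by lia. ring.
    + rewrite negQmid by lia. replace (S p - 1)%nat with p by lia.
      rewrite (Tf_step N a b g p) by lia. rewrite (Tf_step N a b g (S p)) by lia.
      rewrite <- (hh_comb N a b g p Ha Hb) by lia. ring.
Qed.

Lemma Tf_ext N a b g g' i : (i <= N)%nat -> (forall k, (k <= N)%nat -> g k = g' k) ->
  Tf N a b g i = Tf N a b g' i.
Proof.
  intros Hi H. unfold Tf. apply sumf_ext; auto. intros j Hj. f_equal.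
  apply sum_eq. intros k Hk. rewrite H by lia. reflexivity.
Qed.

Lemma Tf_lin N a b g h p q i :
  Tf N a b (fun k => p * g k + q * h k) i = p * Tf N a b g i + q * Tf N a b h i.
Proof.
  unfold Tf, sum_f. rewrite <- sumR_lin. apply sum_eq. intros x _.
  rewrite (sum_eq (fun k => mu a b k * (p * g k + q * h k))
                  (fun k => p * (mu a b k * g k) + q * (mu a b k * h k))) by (intros; ring).
  rewrite sumR_lin. ring.
Qed.

Definition Hc (N : nat) (a b : nat -> R) := sum_f_R0 (fun j => / (mu a b j * b j)) N.

Lemma Sm_nonneg N a b g j : HA N a -> HB N b -> (forall k, (k <= N)%nat -> 0 <= g k) ->
  (j <= N)%nat -> 0 <= sum_f_R0 (fun k => mu a b k * g k) j.
Proof.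
  intros Ha Hb Hg Hj. apply sumR_nonneg. intros k Hk.
  apply Rmult_le_pos. apply Rlt_le, (mu_pos N); auto; lia. apply Hg; lia.
Qed.

Lemma W_nonneg N a b g : HA N a -> HB N b -> (forall k, (k <= N)%nat -> 0 <= g k) -> 0 <= W N a b g.
Proof. intros. unfold W. apply (Sm_nonneg N); auto. Qed.

Lemma W_term N a b g k : HA N a -> HB N b -> (forall k, (k <= N)%nat -> 0 <= g k) ->
  (k <= N)%nat -> mu a b k * g k <= W N a b g.
Proof.
  intros Ha Hb Hg Hk. unfold W. apply (sumR_term (fun k => mu a b k * g k)); auto.
  intros j Hj. apply Rmult_le_pos. apply Rlt_le, (mu_pos N); auto. apply Hg; lia.
Qed.

Lemma inv_mb_pos N a b j : HA N a -> HB N b -> (j <= N)%nat -> 0 < / (mu a b j * b j).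
Proof.
  intros Ha Hb Hj. apply Rinv_0_lt_compat, Rmult_lt_0_compat.
  apply (mu_pos N); auto. apply Hb; auto.
Qed.

Lemma Tf_lower N a b g i : HA N a -> HB N b -> (forall k, (k <= N)%nat -> 0 <= g k) ->
  (i <= N)%nat -> / (mu a b N * b N) * W N a b g <= Tf N a b g i.
Proof.
  intros Ha Hb Hg Hi. unfold Tf, W.
  apply (sumf_ge_last (fun j => / (mu a b j * b j) * sum_f_R0 (fun k => mu a b k * g k) j)); auto.
  intros j Hj. apply Rmult_le_pos. apply Rlt_le, (inv_mb_pos N); auto.
  apply (Sm_nonneg N); auto.
Qed.

Lemma Tf_upper N a b g i : HA N a -> HB N b -> (forall k, (k <= N)%nat -> 0 <= g k) ->
  (i <= N)%nat -> Tf N a b g i <= Hc N a b * W N a b g.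
Proof.
  intros Ha Hb Hg Hi. unfold Tf.
  eapply Rle_trans.
  apply (sumf_le_full (fun j => / (mu a b j * b j) * sum_f_R0 (fun k => mu a b k * g k) j)); auto.
  { intros j Hj. apply Rmult_le_pos. apply Rlt_le, (inv_mb_pos N); auto.
    apply (Sm_nonneg N); auto. }
  unfold Hc. rewrite Rmult_comm, <- sumR_scal.
  apply sum_Rle. intros j Hj. rewrite (Rmult_comm (W N a b g)). apply Rmult_le_compat_l.
  apply Rlt_le, (inv_mb_pos N); auto.
  unfold W. apply sumR_mono; auto. intros k Hk. apply Rmult_le_pos.
  apply Rlt_le, (mu_pos N); auto. apply Hg; auto.
Qed.

Lemma Tf_nonneg N a b g i : HA N a -> HB N b -> (forall k, (k <= N)%nat -> 0 <= g k) ->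
  (i <= N)%nat -> 0 <= Tf N a b g i.
Proof.
  intros Ha Hb Hg Hi. eapply Rle_trans; [|apply (Tf_lower N); auto].
  apply Rmult_le_pos. apply Rlt_le, (inv_mb_pos N); auto. apply (W_nonneg N); auto.
Qed.

Definition ip (N : nat) (a b : nat -> R) (f g : nat -> R) : R :=
  sum_f_R0 (fun i => mu a b i * f i * g i) N.

Lemma ip_T N a b g h :
  ip N a b (Tf N a b g) h =
  sum_f_R0 (fun j => / (mu a b j * b j) * sum_f_R0 (fun k => mu a b k * g k) j
                      * sum_f_R0 (fun k => mu a b k * h k) j) N.
Proof.
  unfold ip, Tf.
  rewrite (sum_eq _ (fun i => (mu a b i * h i) * sum_f i N
     (fun j => / (mu a b j * b j) * sum_f_R0 (fun k => mu a b k * g k) j))) by (intros; ring).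
  rewrite abel. apply sum_eq. intros; ring.
Qed.

Lemma ip_sym_T N a b g h : ip N a b (Tf N a b g) h = ip N a b g (Tf N a b h).
Proof.
  rewrite ip_T. unfold ip.
  rewrite (sum_eq (fun i => mu a b i * g i * Tf N a b h i) (fun i => mu a b i * Tf N a b h i * g i))
    by (intros; ring).
  fold (ip N a b (Tf N a b h) g). rewrite ip_T. apply sum_eq. intros; ring.
Qed.
Definition Setting N a b (f : nat -> nat -> R) :=
  (1 <= N)%nat /\ HA N a /\ HB N b /\ (forall i, (i <= N)%nat -> 0 < f 1%nat i) /\
  (forall n i, (1 <= n)%nat -> (i <= N)%nat -> f (S n) i = f n i * II N a b (f n) i).

Lemma W_pos N a b g : HA N a -> HB N b -> (forall k, (k <= N)%nat -> 0 < g k) -> 0 < W N a b g.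
Proof.
  intros Ha Hb Hg. eapply Rlt_le_trans; [|apply (W_term N a b g 0); auto; try lia].
  apply Rmult_lt_0_compat. apply (mu_pos N); auto; lia. apply Hg; lia.
  intros k Hk; apply Rlt_le, Hg; auto.
Qed.

Lemma Tf_pos N a b g i : HA N a -> HB N b -> (forall k, (k <= N)%nat -> 0 < g k) ->
  (i <= N)%nat -> 0 < Tf N a b g i.
Proof.
  intros Ha Hb Hg Hi. eapply Rlt_le_trans; [|apply (Tf_lower N); auto].
  apply Rmult_lt_0_compat. apply (inv_mb_pos N); auto. apply (W_pos N); auto.
  intros k Hk; apply Rlt_le, Hg; auto.
Qed.

Lemma f_pos N a b f : Setting N a b f -> forall n i, (1 <= n)%nat -> (i <= N)%nat -> 0 < f n i.
Proof.
  intros [HN [Ha [Hb [H1 Hrec]]]]. induction n; intros i Hn Hi. lia.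
  destruct (Nat.eq_dec n 0) as [->|Hn0]. apply H1; auto.
  rewrite Hrec by lia. rewrite II_Tf.
  assert (0 < f n i) by (apply IHn; lia).
  replace (f n i * (/ f n i * Tf N a b (f n) i)) with (Tf N a b (f n) i) by (field; lra).
  apply (Tf_pos N); auto. intros; apply IHn; lia.
Qed.

Lemma f_T N a b f : Setting N a b f -> forall n i, (1 <= n)%nat -> (i <= N)%nat ->
  f (S n) i = Tf N a b (f n) i.
Proof.
  intros HS n i Hn Hi. pose proof (f_pos N a b f HS n i Hn Hi).
  destruct HS as [HN [Ha [Hb [H1 Hrec]]]].
  rewrite Hrec by lia. rewrite II_Tf. field. lra.
Qed.

Definition rr N a b (f : nat -> nat -> R) n i := II N a b (f n) i.
Definition mm N a b f n := minE (rr N a b f n) N.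
Definition MM N a b f n := maxE (rr N a b f n) N.

Lemma rr_eq N a b f : Setting N a b f -> forall n i, (1 <= n)%nat -> (i <= N)%nat ->
  f (S n) i = rr N a b f n i * f n i.
Proof. intros HS n i Hn Hi. destruct HS as [HN [Ha [Hb [H1 Hrec]]]]. rewrite Hrec by lia. unfold rr. ring. Qed.

Lemma rr_pos N a b f : Setting N a b f -> forall n i, (1 <= n)%nat -> (i <= N)%nat ->
  0 < rr N a b f n i.
Proof.
  intros HS n i Hn Hi. pose proof (f_pos N a b f HS n i Hn Hi).
  pose proof (f_pos N a b f HS (S n) i ltac:(lia) Hi).
  rewrite (rr_eq N a b f HS n i Hn Hi) in H0. nra.
Qed.

Definition cL N a b := / (mu a b N * b N).
Definition Mu N a b := sum_f_R0 (mu a b) N.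
Definition mmu N a b := minE (mu a b) N.
Definition gam N a b := cL N a b / (Mu N a b * Hc N a b).
Definition bet N a b := cL N a b * mmu N a b * gam N a b / Hc N a b.

Lemma consts_pos N a b : HA N a -> HB N b ->
  0 < cL N a b /\ 0 < Mu N a b /\ 0 < Hc N a b /\ 0 < mmu N a b /\ 0 < gam N a b /\ 0 < bet N a b.
Proof.
  intros Ha Hb.
  assert (0 < cL N a b) by (apply (inv_mb_pos N); auto).
  assert (0 < Mu N a b).
  { unfold Mu. eapply Rlt_le_trans; [|apply (sumR_term (mu a b) N 0)].
    apply (mu_pos N); auto; lia. intros; apply Rlt_le, (mu_pos N); auto. lia. }
  assert (0 < Hc N a b).
  { unfold Hc. eapply Rlt_le_trans; [|apply (sumR_term _ N 0)].
    apply (inv_mb_pos N); auto; lia. intros; apply Rlt_le, (inv_mb_pos N); auto. lia. }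
  assert (0 < mmu N a b).
  { unfold mmu. destruct (minE_ex (mu a b) N) as [k [Hk ->]]. apply (mu_pos N); auto. }
  assert (0 < gam N a b).
  { unfold gam. apply Rdiv_lt_0_compat; auto. apply Rmult_lt_0_compat; auto. }
  assert (0 < bet N a b).
  { unfold bet. apply Rdiv_lt_0_compat; auto. apply Rmult_lt_0_compat; auto. apply Rmult_lt_0_compat; auto. }
  tauto.
Qed.

Lemma W_Tf_upper N a b g : HA N a -> HB N b -> (forall k, (k <= N)%nat -> 0 <= g k) ->
  W N a b (Tf N a b g) <= Mu N a b * Hc N a b * W N a b g.
Proof.
  intros Ha Hb Hg. unfold W at 1, Mu.
  rewrite Rmult_assoc, Rmult_comm, <- sumR_scal.
  apply sum_Rle. intros k Hk. rewrite (Rmult_comm (Hc N a b * W N a b g)).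
  apply Rmult_le_compat_l. apply Rlt_le, (mu_pos N); auto.
  apply (Tf_upper N); auto.
Qed.

Lemma W_ext N a b g g' : (forall k, (k <= N)%nat -> g k = g' k) -> W N a b g = W N a b g'.
Proof. intros H. unfold W. apply sum_eq. intros; rewrite H; auto. Qed.

Lemma f_lower N a b f : Setting N a b f -> forall n k, (2 <= n)%nat -> (k <= N)%nat ->
  gam N a b * W N a b (f n) <= f n k.
Proof.
  intros HS n k Hn Hk. pose proof HS as [HN [Ha [Hb [H1 Hrec]]]].
  destruct (consts_pos N a b Ha Hb) as [PcL [PMu [PHc [Pmm [Pg Pb]]]]].
  destruct n as [|p]. lia.
  assert (Hp : forall j, (j <= N)%nat -> 0 <= f p j) by (intros; apply Rlt_le, (f_pos N a b f HS); auto; lia).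
  rewrite (W_ext N a b (f (S p)) (Tf N a b (f p))) by (intros; apply (f_T N a b f HS); auto; lia).
  rewrite (f_T N a b f HS) by lia.
  eapply Rle_trans; [|apply (Tf_lower N); auto].
  pose proof (W_Tf_upper N a b (f p) Ha Hb Hp).
  unfold gam. fold (cL N a b).
  apply (Rle_trans _ (cL N a b / (Mu N a b * Hc N a b) * (Mu N a b * Hc N a b * W N a b (f p)))).
  apply Rmult_le_compat_l; auto. apply Rlt_le, Rdiv_lt_0_compat; auto. apply Rmult_lt_0_compat; auto.
  right. field. split; lra.
Qed.

Lemma contr_core (X Y t m0 D Hc0 Wn c : R) :
  0 < X -> X <= Hc0 * Wn -> 0 < Hc0 -> 0 <= D -> 0 <= c -> c * D * Wn <= Y -> (t - m0) * X = Y ->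
  m0 + c / Hc0 * D <= t.
Proof.
  intros HX HXW HH HD Hc HY E.
  assert (c / Hc0 * D * X <= c * D * Wn).
  { apply (Rle_trans _ (c / Hc0 * D * (Hc0 * Wn))).
    apply Rmult_le_compat_l; auto. apply Rmult_le_pos; auto. apply Rmult_le_pos; auto. apply Rlt_le, Rinv_0_lt_compat; auto.
    right. field. lra. }
  assert (c / Hc0 * D * X <= (t - m0) * X) by lra.
  apply Rmult_le_reg_r in H0; auto. lra.
Qed.

Lemma step_bounds N a b f : Setting N a b f -> forall n i, (2 <= n)%nat -> (i <= N)%nat ->
  mm N a b f n + bet N a b * (MM N a b f n - mm N a b f n) <= rr N a b f (S n) i /\
  rr N a b f (S n) i <= MM N a b f n - bet N a b * (MM N a b f n - mm N a b f n).
Proof.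
  intros HS n i Hn Hi. pose proof HS as [HN [Ha [Hb [H1 Hrec]]]].
  destruct (consts_pos N a b Ha Hb) as [PcL [PMu [PHc [Pmm [Pg Pb]]]]].
  set (m := mm N a b f n). set (M := MM N a b f n).
  assert (Hmk : forall k, (k <= N)%nat -> m <= rr N a b f n k) by (intros; apply minE_le; auto).
  assert (HMk : forall k, (k <= N)%nat -> rr N a b f n k <= M) by (intros; apply maxE_ge; auto).
  assert (Hmm : forall k, (k <= N)%nat -> mmu N a b <= mu a b k) by (intros; apply minE_le; auto).
  assert (Pf : forall n' k, (1 <= n')%nat -> (k <= N)%nat -> 0 < f n' k) by (apply (f_pos N a b f HS)).
  assert (HX : 0 < f (S n) i) by (apply Pf; lia).
  assert (HXW : f (S n) i <= Hc N a b * W N a b (f n)).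
  { rewrite (f_T N a b f HS) by lia. apply (Tf_upper N); auto. intros; apply Rlt_le, Pf; lia. }
  assert (HD : 0 <= M - m) by (pose proof (Hmk 0%nat ltac:(lia)); pose proof (HMk 0%nat ltac:(lia)); lra).
  assert (Ht : rr N a b f (S n) i * f (S n) i = f (S (S n)) i) by (rewrite (rr_eq N a b f HS (S n) i) by lia; ring).
  unfold bet. split.
  - destruct (maxE_ex (rr N a b f n) N) as [ks [Hks Eks]]. 
    set (y := fun k => 1 * f (S n) k + (- m) * f n k).
    assert (Hy : forall k, (k <= N)%nat -> 0 <= y k).
    { intros k Hk. unfold y. rewrite (rr_eq N a b f HS n k) by lia.
      pose proof (Hmk k Hk). pose proof (Pf n k ltac:(lia) Hk). nra. }
    assert (ET : Tf N a b y i = f (S (S n)) i - m * f (S n) i).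
    { unfold y. rewrite Tf_lin. rewrite <- !(f_T N a b f HS) by lia. ring. }
    apply (contr_core (f (S n) i) (Tf N a b y i) _ _ _ _ (W N a b (f n))); auto.
    + apply Rmult_le_pos; [apply Rmult_le_pos|]; apply Rlt_le; auto.
    + eapply Rle_trans; [|apply (Tf_lower N); auto]. fold (cL N a b).
      eapply Rle_trans; [|apply Rmult_le_compat_l; [apply Rlt_le; auto|apply (W_term N a b y ks); auto]].
      assert (Eyk : y ks = (M - m) * f n ks) by (unfold y; rewrite (rr_eq N a b f HS n ks) by lia; rewrite <- Eks; unfold M, m, MM, mm; ring).
      rewrite Eyk.
      pose proof (f_lower N a b f HS n ks Hn Hks). pose proof (Hmm ks Hks).
      assert (0 <= W N a b (f n)) by (apply (W_nonneg N); auto; intros; apply Rlt_le, Pf; lia).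
      assert (gam N a b * W N a b (f n) * (M - m) <= f n ks * (M - m)) by (apply Rmult_le_compat_r; auto).
      assert (mmu N a b * (f n ks * (M - m)) <= mu a b ks * (f n ks * (M - m))).
      { apply Rmult_le_compat_r; auto. apply Rmult_le_pos; auto. apply Rlt_le, Pf; lia. }
      assert (mmu N a b * (gam N a b * W N a b (f n) * (M - m)) <= mmu N a b * (f n ks * (M - m)))
        by (apply Rmult_le_compat_l; lra).
      apply (Rle_trans _ (cL N a b * (mmu N a b * (gam N a b * W N a b (f n) * (M - m))))).
      right; ring. apply Rmult_le_compat_l; [lra|]. lra.
    + rewrite ET. rewrite <- Ht. ring.
  - destruct (minE_ex (rr N a b f n) N) as [ks [Hks Eks]]. 
    set (y := fun k => M * f n k + (- 1) * f (S n) k).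
    assert (Hy : forall k, (k <= N)%nat -> 0 <= y k).
    { intros k Hk. unfold y. rewrite (rr_eq N a b f HS n k) by lia.
      pose proof (HMk k Hk). pose proof (Pf n k ltac:(lia) Hk). nra. }
    assert (ET : Tf N a b y i = M * f (S n) i - f (S (S n)) i).
    { unfold y. rewrite Tf_lin. rewrite <- !(f_T N a b f HS) by lia. ring. }
    enough (- M + cL N a b * mmu N a b * gam N a b / Hc N a b * (M - m) <= - rr N a b f (S n) i) by lra.
    apply (contr_core (f (S n) i) (Tf N a b y i) _ _ _ _ (W N a b (f n))); auto.
    + apply Rmult_le_pos; [apply Rmult_le_pos|]; apply Rlt_le; auto.
    + eapply Rle_trans; [|apply (Tf_lower N); auto]. fold (cL N a b).
      eapply Rle_trans; [|apply Rmult_le_compat_l; [apply Rlt_le; auto|apply (W_term N a b y ks); auto]].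
      assert (Eyk : y ks = (M - m) * f n ks) by (unfold y; rewrite (rr_eq N a b f HS n ks) by lia; rewrite <- Eks; unfold M, m, MM, mm; ring).
      rewrite Eyk.
      pose proof (f_lower N a b f HS n ks Hn Hks). pose proof (Hmm ks Hks).
      assert (0 <= W N a b (f n)) by (apply (W_nonneg N); auto; intros; apply Rlt_le, Pf; lia).
      assert (gam N a b * W N a b (f n) * (M - m) <= f n ks * (M - m)) by (apply Rmult_le_compat_r; auto).
      assert (mmu N a b * (f n ks * (M - m)) <= mu a b ks * (f n ks * (M - m))).
      { apply Rmult_le_compat_r; auto. apply Rmult_le_pos; auto. apply Rlt_le, Pf; lia. }
      assert (mmu N a b * (gam N a b * W N a b (f n) * (M - m)) <= mmu N a b * (f n ks * (M - m)))
        by (apply Rmult_le_compat_l; lra).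
      apply (Rle_trans _ (cL N a b * (mmu N a b * (gam N a b * W N a b (f n) * (M - m))))).
      right; ring. apply Rmult_le_compat_l; [lra|]. lra.
    + rewrite ET. rewrite <- Ht. ring.
Qed.
Lemma mm_le_MM N a b f n : mm N a b f n <= MM N a b f n.
Proof.
  unfold mm, MM. pose proof (minE_le (rr N a b f n) N 0 ltac:(lia)).
  pose proof (maxE_ge (rr N a b f n) N 0 ltac:(lia)). lra.
Qed.

Lemma mm_pos N a b f : Setting N a b f -> forall n, (1 <= n)%nat -> 0 < mm N a b f n.
Proof.
  intros HS n Hn. unfold mm. destruct (minE_ex (rr N a b f n) N) as [k [Hk ->]].
  apply (rr_pos N a b f HS); auto.
Qed.

Lemma mono_step N a b f : Setting N a b f -> forall n, (2 <= n)%nat ->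
  mm N a b f n + bet N a b * (MM N a b f n - mm N a b f n) <= mm N a b f (S n) /\
  MM N a b f (S n) <= MM N a b f n - bet N a b * (MM N a b f n - mm N a b f n).
Proof.
  intros HS n Hn. split.
  - unfold mm at 3. apply minE_glb. intros k Hk. apply (step_bounds N a b f HS n k Hn Hk).
  - unfold MM at 1. apply maxE_lub. intros k Hk. apply (step_bounds N a b f HS n k Hn Hk).
Qed.

Definition qq N a b := Rmax (1 - 2 * bet N a b) (1/2).

Lemma qq_range N a b : HA N a -> HB N b -> 0 <= qq N a b < 1.
Proof.
  intros Ha Hb. destruct (consts_pos N a b Ha Hb) as [_ [_ [_ [_ [_ Pb]]]]].
  unfold qq. split. eapply Rle_trans; [|apply Rmax_r]. lra.
  apply Rmax_lub_lt; lra.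
Qed.

Lemma D_geom N a b f : Setting N a b f -> forall k,
  MM N a b f (k + 2) - mm N a b f (k + 2) <= (MM N a b f 2 - mm N a b f 2) * qq N a b ^ k.
Proof.
  intros HS. pose proof HS as [HN [Ha [Hb [H1 Hrec]]]].
  induction k. simpl. lra.
  replace (S k + 2)%nat with (S (k + 2)) by lia.
  destruct (mono_step N a b f HS (k + 2) ltac:(lia)) as [A B].
  pose proof (mm_le_MM N a b f (k + 2)).
  assert ((1 - 2 * bet N a b) * (MM N a b f (k + 2) - mm N a b f (k + 2)) <=
          qq N a b * (MM N a b f (k + 2) - mm N a b f (k + 2))).
  { apply Rmult_le_compat_r. lra. unfold qq. apply Rmax_l. }
  assert (qq N a b * (MM N a b f (k + 2) - mm N a b f (k + 2)) <=
          qq N a b * ((MM N a b f 2 - mm N a b f 2) * qq N a b ^ k)).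
  { apply Rmult_le_compat_l; auto. apply (qq_range N a b Ha Hb). }
  simpl. nra.
Qed.

Lemma mm_mono N a b f : Setting N a b f -> forall k, mm N a b f 2 <= mm N a b f (k + 2).
Proof.
  intros HS. induction k. simpl. lra.
  replace (S k + 2)%nat with (S (k + 2)) by lia.
  destruct (mono_step N a b f HS (k + 2) ltac:(lia)) as [A B].
  pose proof (mm_le_MM N a b f (k + 2)).
  pose proof HS as [HN [Ha [Hb [H1 Hrec]]]].
  destruct (consts_pos N a b Ha Hb) as [_ [_ [_ [_ [_ Pb]]]]]. nra.
Qed.

Lemma D_cv0 N a b f : Setting N a b f ->
  Un_cv (fun k => MM N a b f (k + 2) - mm N a b f (k + 2)) 0.
Proof.
  intros HS. pose proof HS as [HN [Ha [Hb [H1 Hrec]]]].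
  apply (Un_cv_squeeze (fun _ => 0) (fun k => (MM N a b f 2 - mm N a b f 2) * qq N a b ^ k)).
  intros k. split. pose proof (mm_le_MM N a b f (k + 2)). lra. apply (D_geom N a b f HS).
  apply Un_cv_const. replace 0 with ((MM N a b f 2 - mm N a b f 2) * 0) by ring.
  apply CV_mult. apply Un_cv_const. apply pow_cv0. apply (qq_range N a b Ha Hb).
Qed.

Lemma lim_L N a b f : Setting N a b f -> { L | Un_cv (fun k => mm N a b f (k + 2)) L }.
Proof.
  intros HS. pose proof HS as [HN [Ha [Hb [H1 Hrec]]]].
  apply (geom_cauchy _ (MM N a b f 2 - mm N a b f 2) (qq N a b)).
  pose proof (mm_le_MM N a b f 2). lra. apply (qq_range N a b Ha Hb).
  intros k. replace (S k + 2)%nat with (S (k + 2)) by lia.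
  destruct (mono_step N a b f HS (k + 2) ltac:(lia)) as [A B].
  pose proof (mm_le_MM N a b f (S (k + 2))). pose proof (mm_le_MM N a b f (k + 2)).
  pose proof (D_geom N a b f HS k).
  destruct (consts_pos N a b Ha Hb) as [_ [_ [_ [_ [_ Pb]]]]].
  apply Rabs_le. split; nra.
Qed.
Lemma diff_bound X Wn Wn1 e d m1 m2 : 0 < X -> 0 < Wn -> 0 < Wn1 -> 0 < m1 -> 0 < m2 ->
  m1 * X <= Wn -> m2 * Wn <= Wn1 -> Rabs e <= d * Wn ->
  Rabs (X * e / (Wn * Wn1)) <= d / (m1 * m2).
Proof.
  intros HX HW HW1 Hm1 Hm2 A B C.
  assert (Hd : 0 <= d). { pose proof (Rabs_pos e). destruct (Rle_or_lt 0 d); auto. nra. }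
  assert (K1 : X * Rabs e * m2 <= X * (d * Wn) * m2).
  { apply Rmult_le_compat_r; [lra|]. apply Rmult_le_compat_l; lra. }
  assert (K2 : X * (d * Wn) * m2 * m1 <= Wn * (d * Wn) * m2).
  { replace (X * (d * Wn) * m2 * m1) with ((m1 * X) * (d * Wn * m2)) by ring.
    replace (Wn * (d * Wn) * m2) with (Wn * (d * Wn * m2)) by ring.
    apply Rmult_le_compat_r; auto. apply Rmult_le_pos; [|lra]. apply Rmult_le_pos; lra. }
  assert (K3 : Wn * (d * Wn) * m2 <= d * Wn * Wn1).
  { replace (Wn * (d * Wn) * m2) with ((m2 * Wn) * (d * Wn)) by ring.
    replace (d * Wn * Wn1) with (Wn1 * (d * Wn)) by ring.
    apply Rmult_le_compat_r; auto. apply Rmult_le_pos; lra. }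
  assert (K : X * Rabs e * (m1 * m2) <= d * (Wn * Wn1)).
  { replace (X * Rabs e * (m1 * m2)) with (X * Rabs e * m2 * m1) by ring.
    assert (X * Rabs e * m2 * m1 <= X * (d * Wn) * m2 * m1) by (apply Rmult_le_compat_r; lra).
    lra. }
  unfold Rdiv. rewrite !Rabs_mult. rewrite (Rabs_pos_eq X) by lra.
  rewrite Rabs_inv. rewrite (Rabs_pos_eq (Wn * Wn1)) by (apply Rmult_le_pos; lra).
  apply (Rmult_le_reg_r (Wn * Wn1 * (m1 * m2))).
  apply Rmult_lt_0_compat; apply Rmult_lt_0_compat; auto.
  replace (X * Rabs e * / (Wn * Wn1) * (Wn * Wn1 * (m1 * m2))) with (X * Rabs e * (m1 * m2))
    by (field; split; lra).
  replace (d * / (m1 * m2) * (Wn * Wn1 * (m1 * m2))) with (d * (Wn * Wn1)) by (field; split; lra).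
  auto.
Qed.

Definition ux N a b (f : nat -> nat -> R) k i :=
  if Nat.leb i N then f (k + 2)%nat i / W N a b (f (k + 2)%nat) else 0.

Lemma W_succ_bounds N a b f : Setting N a b f -> forall n, (1 <= n)%nat ->
  mm N a b f n * W N a b (f n) <= W N a b (f (S n)) /\
  W N a b (f (S n)) <= MM N a b f n * W N a b (f n).
Proof.
  intros HS n Hn. pose proof HS as [HN [Ha [Hb [H1 Hrec]]]].
  rewrite (W_ext N a b (f (S n)) (fun k => rr N a b f n k * f n k)) by (intros; apply (rr_eq N a b f HS); auto).
  unfold W. rewrite <- !sumR_scal. split; apply sum_Rle; intros k Hk.
  - pose proof (minE_le (rr N a b f n) N k Hk). fold (mm N a b f n) in H.
    pose proof (mu_pos N a b k Ha Hb Hk). pose proof (f_pos N a b f HS n k Hn Hk).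
    assert (0 < mu a b k * f n k) by (apply Rmult_lt_0_compat; auto).
    replace (mu a b k * (rr N a b f n k * f n k)) with (rr N a b f n k * (mu a b k * f n k)) by ring.
    apply Rmult_le_compat_r; lra.
  - pose proof (maxE_ge (rr N a b f n) N k Hk). fold (MM N a b f n) in H.
    pose proof (mu_pos N a b k Ha Hb Hk). pose proof (f_pos N a b f HS n k Hn Hk).
    assert (0 < mu a b k * f n k) by (apply Rmult_lt_0_compat; auto).
    replace (mu a b k * (rr N a b f n k * f n k)) with (rr N a b f n k * (mu a b k * f n k)) by ring.
    apply Rmult_le_compat_r; lra.
Qed.

Lemma ux_step N a b f : Setting N a b f -> forall k i,
  Rabs (ux N a b f (S k) i - ux N a b f k i) <=
  (MM N a b f 2 - mm N a b f 2) / (mmu N a b * mm N a b f 2) * qq N a b ^ k.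
Proof.
  intros HS k i. pose proof HS as [HN [Ha [Hb [H1 Hrec]]]].
  destruct (consts_pos N a b Ha Hb) as [PcL [PMu [PHc [Pmm [Pg Pb]]]]].
  pose proof (mm_pos N a b f HS 2 ltac:(lia)) as Pm2.
  assert (Hq : 0 <= qq N a b ^ k) by (apply pow_le; apply (qq_range N a b Ha Hb)).
  unfold ux. destruct (Nat.leb_spec i N) as [Hi|Hi].
  2:{ rewrite Rminus_diag, Rabs_R0. apply Rmult_le_pos; auto.
      apply Rmult_le_pos. pose proof (mm_le_MM N a b f 2). lra.
      apply Rlt_le, Rinv_0_lt_compat, Rmult_lt_0_compat; auto. }
  replace (S k + 2)%nat with (S (k + 2)) by lia.
  set (n := (k + 2)%nat).
  assert (Pf : forall n' j, (1 <= n')%nat -> (j <= N)%nat -> 0 < f n' j) by apply (f_pos N a b f HS).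
  assert (HWn : 0 < W N a b (f n)) by (apply (W_pos N); auto; intros; apply Pf; unfold n; lia).
  assert (HWn1 : 0 < W N a b (f (S n))) by (apply (W_pos N); auto; intros; apply Pf; unfold n; lia).
  destruct (W_succ_bounds N a b f HS n ltac:(unfold n; lia)) as [B1 B2].
  pose proof (mm_mono N a b f HS k) as Mk. fold n in Mk.
  pose proof (D_geom N a b f HS k) as Dk. fold n in Dk.
  assert (Hr1 : mm N a b f n <= rr N a b f n i) by (apply minE_le; auto).
  assert (Hr2 : rr N a b f n i <= MM N a b f n) by (apply maxE_ge; auto).
  rewrite (rr_eq N a b f HS n i) by (unfold n; lia).
  replace (rr N a b f n i * f n i / W N a b (f (S n)) - f n i / W N a b (f n))
    with (f n i * (rr N a b f n i * W N a b (f n) - W N a b (f (S n))) / (W N a b (f n) * W N a b (f (S n))))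
    by (field; split; lra).
  eapply Rle_trans.
  apply (diff_bound _ _ _ _ (MM N a b f n - mm N a b f n) (mmu N a b) (mm N a b f 2)); auto.
  apply Pf; unfold n; lia.
  { pose proof (W_term N a b (f n) i Ha Hb ltac:(intros; apply Rlt_le, Pf; unfold n; lia) Hi).
    pose proof (minE_le (mu a b) N i Hi). fold (mmu N a b) in H0.
    pose proof (Pf n i ltac:(unfold n; lia) Hi).
    assert (mmu N a b * f n i <= mu a b i * f n i) by (apply Rmult_le_compat_r; lra). lra. }
  { assert (mm N a b f 2 * W N a b (f n) <= mm N a b f n * W N a b (f n)) by (apply Rmult_le_compat_r; lra). lra. }
  { apply Rabs_le. assert (mm N a b f n * W N a b (f n) <= rr N a b f n i * W N a b (f n)) by (apply Rmult_le_compat_r; lra).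
    assert (rr N a b f n i * W N a b (f n) <= MM N a b f n * W N a b (f n)) by (apply Rmult_le_compat_r; lra).
    split; nra. }
  unfold Rdiv. rewrite Rmult_assoc, (Rmult_comm (/ _)), <- Rmult_assoc.
  apply Rmult_le_compat_r. apply Rlt_le, Rinv_0_lt_compat, Rmult_lt_0_compat; auto.
  auto.
Qed.

Lemma ux_cv N a b f : Setting N a b f -> forall i, { l | Un_cv (fun k => ux N a b f k i) l }.
Proof.
  intros HS i. pose proof HS as [HN [Ha [Hb [H1 Hrec]]]].
  destruct (consts_pos N a b Ha Hb) as [PcL [PMu [PHc [Pmm [Pg Pb]]]]].
  pose proof (mm_pos N a b f HS 2 ltac:(lia)) as Pm2.
  apply (geom_cauchy _ ((MM N a b f 2 - mm N a b f 2) / (mmu N a b * mm N a b f 2)) (qq N a b)).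
  apply Rmult_le_pos. pose proof (mm_le_MM N a b f 2). lra.
  apply Rlt_le, Rinv_0_lt_compat, Rmult_lt_0_compat; auto.
  apply (qq_range N a b Ha Hb).
  intros k. apply (ux_step N a b f HS k i).
Qed.

Lemma Tf_cv N a b (g : nat -> nat -> R) (l : nat -> R) i : (i <= N)%nat ->
  (forall j, (j <= N)%nat -> Un_cv (fun k => g k j) (l j)) ->
  Un_cv (fun k => Tf N a b (g k) i) (Tf N a b l i).
Proof.
  intros Hi H. unfold Tf, sum_f.
  apply (Un_cv_sum (fun k x => / (mu a b (x + i)%nat * b (x + i)%nat) * sum_f_R0 (fun kk => mu a b kk * g k kk) (x + i)%nat)
                   (fun x => / (mu a b (x + i)%nat * b (x + i)%nat) * sum_f_R0 (fun kk => mu a b kk * l kk) (x + i)%nat)).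
  intros x Hx. apply CV_mult. apply Un_cv_const.
  apply (Un_cv_sum (fun k kk => mu a b kk * g k kk) (fun kk => mu a b kk * l kk)).
  intros kk Hkk. apply CV_mult. apply Un_cv_const. apply H. lia.
Qed.

Lemma eigvec N a b f L : Setting N a b f -> Un_cv (fun k => mm N a b f (k + 2)) L ->
  exists u, (forall i, (i <= N)%nat -> 0 < u i) /\ (forall i, (i <= N)%nat -> Tf N a b u i = L * u i).
Proof.
  intros HS HL. pose proof HS as [HN [Ha [Hb [H1 Hrec]]]].
  destruct (consts_pos N a b Ha Hb) as [PcL [PMu [PHc [Pmm [Pg Pb]]]]].
  assert (Pf : forall n' j, (1 <= n')%nat -> (j <= N)%nat -> 0 < f n' j) by apply (f_pos N a b f HS).
  pose proof (mm_pos N a b f HS 2 ltac:(lia)) as Pm2.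
  assert (HL0 : 0 < L).
  { apply (Rlt_le_trans _ (mm N a b f 2)); auto. apply (Un_cv_ge _ _ _ (mm_mono N a b f HS) HL). }
  assert (HM : Un_cv (fun k => MM N a b f (k + 2)) L).
  { apply (Un_cv_ext (fun k => mm N a b f (k + 2) + (MM N a b f (k + 2) - mm N a b f (k + 2)))).
    intros; ring. replace L with (L + 0) by ring. apply CV_plus; auto. apply (D_cv0 N a b f HS). }
  assert (Hr : forall i, (i <= N)%nat -> Un_cv (fun k => rr N a b f (k + 2) i) L).
  { intros i Hi. apply (Un_cv_squeeze _ _ _ _ (fun k => conj (minE_le _ _ _ Hi) (maxE_ge _ _ _ Hi)) HL HM). }
  set (ul := fun i => proj1_sig (ux_cv N a b f HS i)).
  assert (Hul : forall i, Un_cv (fun k => ux N a b f k i) (ul i)) by (intros i; apply (proj2_sig (ux_cv N a b f HS i))).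
  assert (HWk : forall k, (0 < W N a b (f (k + 2)%nat))) by (intros; apply (W_pos N); auto; intros; apply Pf; lia).
  assert (Hux : forall k i, (i <= N)%nat -> ux N a b f k i = / W N a b (f (k + 2)%nat) * f (k + 2)%nat i + 0 * f (k + 2)%nat i).
  { intros k i Hi. unfold ux. replace (Nat.leb i N) with true by (symmetry; apply Nat.leb_le; auto).
    unfold Rdiv; ring. }
  assert (Hnn : forall i, 0 <= ul i).
  { intros i. apply (Un_cv_ge (fun k => ux N a b f k i)); auto. intros k. unfold ux.
    destruct (Nat.leb i N) eqn:E. apply Nat.leb_le in E. unfold Rdiv. apply Rmult_le_pos.
    apply Rlt_le, Pf; auto; lia. apply Rlt_le, Rinv_0_lt_compat; auto. lra. }
  assert (HW1 : W N a b ul = 1).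
  { assert (C : Un_cv (fun k => W N a b (ux N a b f k)) (W N a b ul)).
    { unfold W. apply (Un_cv_sum (fun k j => mu a b j * ux N a b f k j) (fun j => mu a b j * ul j)).
      intros j Hj. apply CV_mult. apply Un_cv_const. auto. }
    apply (UL_sequence _ _ _ C). apply (Un_cv_ext (fun _ => 1)); [|apply Un_cv_const].
    intros k. rewrite (W_ext N a b _ (fun j => / W N a b (f (k + 2)%nat) * f (k + 2)%nat j + 0 * f (k + 2)%nat j))
      by (intros; apply Hux; auto).
    unfold W at 1. rewrite (sum_eq _ (fun j => / W N a b (f (k + 2)%nat) * (mu a b j * f (k + 2)%nat j))) by (intros; ring).
    rewrite sumR_scal. fold (W N a b (f (k + 2)%nat)). field. specialize (HWk k). lra. }
  assert (HT : forall i, (i <= N)%nat -> Tf N a b ul i = L * ul i).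
  { intros i Hi. apply (UL_sequence (fun k => Tf N a b (ux N a b f k) i)).
    apply Tf_cv; auto.
    apply (Un_cv_ext (fun k => rr N a b f (k + 2) i * ux N a b f k i)).
    2:{ apply CV_mult; auto. }
    intros k. rewrite (Tf_ext N a b _ _ i Hi (fun kk H => Hux k kk H)).
    rewrite Tf_lin. rewrite <- (f_T N a b f HS) by lia. rewrite (rr_eq N a b f HS) by lia.
    rewrite Hux by auto. ring. }
  exists ul. split; auto.
  intros i Hi. 
  assert (0 < Tf N a b ul i).
  { eapply Rlt_le_trans; [|apply (Tf_lower N); auto]. rewrite HW1, Rmult_1_r. exact PcL. }
  rewrite HT in H; auto. nra.
Qed.
Lemma negQpow_S N a b m v : negQpow N a b (S m) v = negQpow N a b m (negQ N a b v).
Proof. induction m. reflexivity. change (negQpow N a b (S (S m)) v) with (negQ N a b (negQpow N a b (S m) v)).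
  rewrite IHm. reflexivity. Qed.

Lemma negQpow_ext N a b m v w : (forall j, (j <= N)%nat -> v j = w j) ->
  forall i, (i <= N)%nat -> negQpow N a b m v i = negQpow N a b m w i.
Proof.
  intros H. induction m; intros i Hi. simpl; auto.
  simpl. apply negQ_ext. auto.
Qed.

Theorem mainTheorem3 (N : nat) (a b : nat -> R) (lam0 : R)
  (f : nat -> nat -> R) :
  (1 <= N)%nat ->
  (forall i, (1 <= i <= N)%nat -> 0 < a i) ->
  (forall i, (i <= N)%nat -> 0 < b i) ->
  is_min_eigenvalue_negQ N a b lam0 ->
  (forall i, (i <= N)%nat -> 0 < f 1%nat i) ->
  (forall n i, (1 <= n)%nat -> (i <= N)%nat ->
     f (S n) i = f n i * II N a b (f n) i) ->
  (* -Q is invertible on R^E *)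
  (forall v : nat -> R, (forall i, (i <= N)%nat -> negQ N a b v i = 0) ->
     forall i, (i <= N)%nat -> v i = 0) /\
  (* f_{n+1} = (-Q)^{-1} f_n, i.e. (-Q) f_{n+1} = f_n *)
  (forall n i, (1 <= n)%nat -> (i <= N)%nat ->
     negQ N a b (f (S n)) i = f n i) /\
  (* f_{n+1} = (-Q)^{-n} f_1, i.e. (-Q)^n f_{n+1} = f_1 *)
  (forall n i, (1 <= n)%nat -> (i <= N)%nat ->
     negQpow N a b n (f (S n)) i = f 1%nat i) /\
  (forall i, (i <= N)%nat ->
     Un_cv (fun n => II N a b (f (S n)) i) (/ lam0)) /\
  Un_cv (fun n => minE (II N a b (f (S n))) N) (/ lam0) /\
  Un_cv (fun n => maxE (II N a b (f (S n))) N) (/ lam0).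
Proof.
  intros HN Ha Hb [Heig Hmin] H1 Hrec.
  assert (HS : Setting N a b f) by (repeat split; auto).
  change (HA N a) in Ha. change (HB N b) in Hb.
  assert (PA : forall v : nat -> R, (forall i, (i <= N)%nat -> negQ N a b v i = 0) ->
     forall i, (i <= N)%nat -> v i = 0) by (intros; apply (negQ_inj N a b v); auto).
  assert (PB : forall n i, (1 <= n)%nat -> (i <= N)%nat -> negQ N a b (f (S n)) i = f n i).
  { intros n i Hn Hi. rewrite (negQ_ext N a b _ (Tf N a b (f n))) by (intros; apply (f_T N a b f HS); auto).
    apply negQ_Tf; auto. }
  assert (PC : forall n i, (1 <= n)%nat -> (i <= N)%nat -> negQpow N a b n (f (S n)) i = f 1%nat i).
  { induction n; intros i Hn Hi. lia.
    destruct (Nat.eq_dec n 0) as [->|Hn0]. simpl. apply PB; auto.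
    rewrite negQpow_S. rewrite (negQpow_ext N a b n _ (f (S n))) by (auto; intros; apply PB; auto; lia).
    apply IHn; auto; lia. }
  split; [exact PA|split; [exact PB|split; [exact PC|]]].
  destruct (lim_L N a b f HS) as [L HL].
  destruct (consts_pos N a b Ha Hb) as [PcL [PMu [PHc [Pmm [Pg Pb]]]]].
  pose proof (mm_pos N a b f HS 2 ltac:(lia)) as Pm2.
  assert (HL0 : 0 < L).
  { apply (Rlt_le_trans _ (mm N a b f 2)); auto. apply (Un_cv_ge _ _ _ (mm_mono N a b f HS) HL). }
  assert (HM : Un_cv (fun k => MM N a b f (k + 2)) L).
  { apply (Un_cv_ext (fun k => mm N a b f (k + 2) + (MM N a b f (k + 2) - mm N a b f (k + 2)))).
    intros; ring. replace L with (L + 0) by ring. apply CV_plus; auto. apply (D_cv0 N a b f HS). }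
  assert (Hr : forall i, (i <= N)%nat -> Un_cv (fun k => rr N a b f (k + 2) i) L).
  { intros i Hi. apply (Un_cv_squeeze _ _ _ _ (fun k => conj (minE_le _ _ _ Hi) (maxE_ge _ _ _ Hi)) HL HM). }
  destruct (eigvec N a b f L HS HL) as [u [Hu HTu]].
  (* 1/L is an eigenvalue *)
  assert (Hle1 : lam0 <= / L).
  { apply Hmin. exists u. split. exists 0%nat. split. lia. pose proof (Hu 0%nat ltac:(lia)). lra.
    intros i Hi. pose proof (negQ_Tf N a b u i HN Ha Hb Hi) as E.
    rewrite (negQ_ext N a b _ (fun k => L * u k + 0 * u k)) in E by (intros; rewrite HTu; auto; ring).
    rewrite negQ_lin in E. rewrite <- E. field. lra. }
  destruct Heig as [w [[i0 [Hi0 Hw0]] Hw]].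
  assert (Hl0 : lam0 <> 0).
  { intros E. apply Hw0. apply PA; auto. intros i Hi. rewrite Hw by auto. rewrite E. ring. }
  assert (HTw : forall k, (k <= N)%nat -> lam0 * Tf N a b w k = w k).
  { intros k Hk.
    assert (V : forall i, (i <= N)%nat -> (fun j => 1 * Tf N a b (negQ N a b w) j + (-1) * w j) i = 0).
    { apply PA. intros i Hi. rewrite negQ_lin. rewrite negQ_Tf by auto. rewrite Hw by auto. ring. }
    specialize (V k Hk). simpl in V.
    rewrite (Tf_ext N a b _ (fun j => lam0 * w j + 0 * w j)) in V by (auto; intros; rewrite Hw; auto; ring).
    rewrite Tf_lin in V. lra. }
  assert (HTw' : forall k, (k <= N)%nat -> Tf N a b w k = / lam0 * w k).
  { intros k Hk. rewrite <- (HTw k Hk). field. auto. }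
  assert (Hmu : forall k, (k <= N)%nat -> 0 < mu a b k) by (intros; apply (mu_pos N); auto).
  assert (Hlpos : 0 < lam0).
  { assert (I1 : 0 <= ip N a b (Tf N a b w) w).
    { rewrite ip_T. apply sumR_nonneg. intros j Hj.
      pose proof (inv_mb_pos N a b j Ha Hb Hj).
      rewrite Rmult_assoc. apply Rmult_le_pos. lra. apply Rle_0_sqr. }
    assert (I2 : ip N a b (Tf N a b w) w = / lam0 * ip N a b w w).
    { unfold ip. rewrite <- sumR_scal. apply sum_eq. intros k Hk. rewrite HTw' by auto. ring. }
    assert (I3 : 0 < ip N a b w w).
    { unfold ip. eapply Rlt_le_trans; [|apply (sumR_term _ N i0); auto].
      pose proof (Hmu i0 Hi0). assert (0 < w i0 * w i0) by (apply Rsqr_pos_lt; auto).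
      cbv beta. rewrite Rmult_assoc. apply Rmult_lt_0_compat; auto.
      intros k Hk. pose proof (Hmu k Hk). cbv beta. rewrite Rmult_assoc. apply Rmult_le_pos. lra. apply Rle_0_sqr. }
    destruct (Rlt_or_le 0 lam0) as [|Hneg]; auto.
    assert (lam0 < 0) by (destruct Hneg; [auto|contradiction]).
    assert (/ lam0 < 0) by (apply Rinv_lt_0_compat; auto).
    assert (/ lam0 * ip N a b w w < 0) by nra. lra. }
  assert (Habs : forall k, (k <= N)%nat -> / lam0 * Rabs (w k) <= Tf N a b (fun j => Rabs (w j)) k).
  { intros k Hk.
    assert (A1 : 0 <= Tf N a b (fun j => 1 * Rabs (w j) + (-1) * w j) k).
    { apply (Tf_nonneg N); auto. intros j Hj. pose proof (Rle_abs (w j)). lra. }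
    assert (A2 : 0 <= Tf N a b (fun j => 1 * Rabs (w j) + 1 * w j) k).
    { apply (Tf_nonneg N); auto. intros j Hj. pose proof (Rle_abs (- w j)). rewrite Rabs_Ropp in H. lra. }
    rewrite Tf_lin in A1, A2. rewrite HTw' in A1, A2 by auto.
    assert (0 < / lam0) by (apply Rinv_0_lt_compat; auto).
    unfold Rabs at 1. destruct (Rcase_abs (w k)); nra. }
  assert (Hle2 : / lam0 <= L).
  { pose proof (ip_sym_T N a b u (fun j => Rabs (w j))) as S.
    assert (S1 : ip N a b (Tf N a b u) (fun j => Rabs (w j)) = L * ip N a b u (fun j => Rabs (w j))).
    { unfold ip. rewrite <- sumR_scal. apply sum_eq. intros k Hk. rewrite HTu by auto. ring. }
    assert (S2 : / lam0 * ip N a b u (fun j => Rabs (w j)) <= ip N a b u (Tf N a b (fun j => Rabs (w j)))).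
    { unfold ip. rewrite <- sumR_scal. apply sum_Rle. intros k Hk.
      pose proof (Habs k Hk). pose proof (Hmu k Hk). pose proof (Hu k Hk).
      assert (0 < mu a b k * u k) by (apply Rmult_lt_0_compat; auto).
      replace (/ lam0 * (mu a b k * u k * Rabs (w k))) with ((mu a b k * u k) * (/ lam0 * Rabs (w k))) by ring.
      apply Rmult_le_compat_l; lra. }
    assert (S3 : 0 < ip N a b u (fun j => Rabs (w j))).
    { unfold ip. eapply Rlt_le_trans; [|apply (sumR_term _ N i0); auto].
      pose proof (Hmu i0 Hi0). pose proof (Hu i0 Hi0). pose proof (Rabs_pos_lt _ Hw0).
      cbv beta. apply Rmult_lt_0_compat; auto. apply Rmult_lt_0_compat; auto.
      intros k Hk. pose proof (Hmu k Hk). pose proof (Hu k Hk). pose proof (Rabs_pos (w k)).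
      cbv beta. apply Rmult_le_pos; auto. apply Rmult_le_pos; lra. }
    rewrite <- S, S1 in S2. apply Rmult_le_reg_r in S2; auto. }
  assert (EL : / lam0 = L).
  { apply Rle_antisym; auto.
    assert (lam0 * L <= 1).
    { apply (Rmult_le_reg_r (/ L)). apply Rinv_0_lt_compat; auto.
      replace (lam0 * L * / L) with lam0 by (field; lra). lra. }
    apply (Rmult_le_reg_l lam0); auto. replace (lam0 * / lam0) with 1 by (field; lra). lra. }
  rewrite EL. split; [|split].
  - intros i Hi. apply (Un_cv_shift _ 1). apply (Un_cv_ext (fun k => rr N a b f (k + 2) i)); auto.
    intros k. unfold rr. replace (S (k + 1)) with (k + 2)%nat by lia. reflexivity.
  - apply (Un_cv_shift _ 1). apply (Un_cv_ext (fun k => mm N a b f (k + 2))); auto.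
    intros k. unfold mm, rr. replace (S (k + 1)) with (k + 2)%nat by lia. reflexivity.
  - apply (Un_cv_shift _ 1). apply (Un_cv_ext (fun k => MM N a b f (k + 2))); auto.
    intros k. unfold MM, rr. replace (S (k + 1)) with (k + 2)%nat by lia. reflexivity.
Qed.
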